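(* Let $d\in\mathbb{N}$, $a\in\mathbb{R}$, $b\in(a,\infty)$. For every $v=(v_1,\dots,v_{d+1})\in\mathbb{R}^{d+1}$ let $I^v=\{x\in[a,b]^d\colon v_{d+1}+\sum_{i=1}^d v_ix_i>0\}$. Let $\lambda_d$ denote the Lebesgue measure on $\mathbb{R}^d$, let $p\colon[a,b]^d\to[0,\infty)$ be bounded and measurable, and let $u\in\mathbb{R}^{d+1}\setminus\{0\}$. Then there exist $\varepsilon,C\in(0,\infty)$ such that for all $v,w\in\mathbb{R}^{d+1}$ with $\max\{\|u-v\|,\|u-w\|\}\le\varepsilon$ it holds that $$\int_{I^v\,\Delta\, I^w}p(x)\,\lambda_d(\mathrm{d}x)\le C\|v-w\|,$$ where $\Delta$ denotes the symmetric difference of sets.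
   Context: $\|\cdot\|$ denotes the Euclidean norm. *)

(* Defs.v *)
From HB Require Import structures.
From mathcomp Require Import all_boot all_order all_algebra.
From mathcomp Require Import all_classical all_reals all_analysis.
Set Implicit Arguments. Unset Strict Implicit. Unset Printing Implicit Defensive.
Import Order.TTheory GRing.Theory Num.Theory.
Import numFieldNormedType.Exports.
Local Open Scope classical_set_scope.
Local Open Scope ring_scope.

Definition enorm (R : realType) (n : nat) (v : 'rV[R]_n) : R :=
  Num.sqrt (\sum_(i < n) (v ord0 i) ^+ 2).

(* Lebesgue measure lambda_n on R^n = n.-tuple R (with its product sigma-algebra),
   built as iterated product measure:
   lambda_0 = Dirac mass at the empty tuple,
   lambda_{n+1} = image of (lebesgue_measure (x) lambda_n) under (x, t) |-> x :: t. *)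
Fixpoint lebesgue_tuple (R : realType) (n : nat) : set (n.-tuple R) -> \bar R :=
  match n with
  | 0 => fun A => dirac [tuple] A
  | n'.+1 => pushforward ((@lebesgue_measure R) \x^ (@lebesgue_tuple R n'))%E
               (fun p : R * n'.-tuple R => [tuple of p.1 :: p.2])
  end.

Definition cube (R : realType) (d : nat) (a b : R) : set (d.-tuple R) :=
  [set x | forall i : 'I_d, a <= tnth x i <= b].

(* I^v = { x in [a,b]^d : v_{d+1} + sum_{i=1}^d v_i x_i > 0 } for v in R^{d+1};
   coordinates v_1..v_d are v 0 (widen i), v_{d+1} is v 0 ord_max. *)
Definition Iset (R : realType) (d : nat) (a b : R) (v : 'rV[R]_d.+1)
  : set (d.-tuple R) :=
  [set x | cube a b x /\
     0 < v ord0 ord_max + \sum_(i < d) v ord0 (widen_ord (leqnSn d) i) * tnth x i].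

Definition symdiff (T : Type) (A B : set T) : set T := (A `\` B) `|` (B `\` A).

(* Main.v *)
Require Import Defs.
From HB Require Import structures.
From mathcomp Require Import all_boot all_order all_algebra.
From mathcomp Require Import all_classical all_reals all_analysis.
From mathcomp Require Import measurable_realfun measurable_fun_approximation.
From mathcomp Require Import ring lra.
Import Order.TTheory GRing.Theory Num.Theory.
Import numFieldNormedType.Exports.
Local Open Scope classical_set_scope.
Local Open Scope ring_scope.
Set Implicit Arguments. Unset Strict Implicit. Unset Printing Implicit Defensive.

Section Next.
Context (R : realType) (n : nat) (mu : {sigma_finite_measure set (n.-tuple R) -> \bar R}).
Local Open Scope ereal_scope.
Definition consf (p : R * n.-tuple R) : n.+1.-tuple R := [tuple of p.1 :: p.2].
Lemma mconsf : measurable_fun setT consf.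
Proof. exact: measurable_cons. Qed.
Definition nextm := pushforward ((@lebesgue_measure R) \x^ mu) consf.
Let nm0 : nextm set0 = 0.
Proof. by rewrite /nextm /pushforward preimage_set0 measure0. Qed.
Let nm_ge0 A : 0 <= nextm A.
Proof. exact: (measure_ge0 ((@lebesgue_measure R) \x^ mu)). Qed.
Let nm_sa : semi_sigma_additive nextm.
Proof.
move=> F mF tF mUF; rewrite /nextm /pushforward preimage_bigcup.
apply: measure_semi_sigma_additive.
- by move=> k; rewrite -[X in measurable X]setTI; exact: mconsf.
- apply/trivIsetP => /= i j _ _ ij; rewrite -preimage_setI.
  by move/trivIsetP : tF => /(_ _ _ _ _ ij) ->//; rewrite preimage_set0.
- by rewrite -preimage_bigcup -[X in measurable X]setTI; exact: mconsf.
Qed.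
HB.instance Definition _ := isMeasure.Build _ _ _ nextm nm0 nm_ge0 nm_sa.

Lemma nextm_sf : sigma_finite setT nextm.
Proof.
have /sigma_finiteP [G [GT Gnd Goo]] := sigma_finiteT (@lebesgue_measure R).
have /sigma_finiteP [F [FT Fnd Foo]] := sigma_finiteT mu.
exists (fun k => [set x : n.+1.-tuple R | G k (thead x) /\ F k [tuple of behead x]]).
  apply/seteqP; split => // x _.
  have : G^~ (thead x) `<=` setT by [].
  have : (setT : set R) (thead x) by [].
  rewrite GT => -[i _ Gi].
  have : (setT : set (n.-tuple R)) [tuple of behead x] by [].
  rewrite FT => -[j _ Fj].
  exists (maxn i j) => //; split.
    by move: (Gnd _ _ (leq_maxl i j)) => /subsetPset; apply.
  by move: (Fnd _ _ (leq_maxr i j)) => /subsetPset; apply.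
move=> k; split.
  have -> : [set x : n.+1.-tuple R | G k (thead x) /\ F k [tuple of behead x]] =
    ((fun x => thead x) @^-1` G k) `&` ((fun x : n.+1.-tuple R => [tuple of behead x]) @^-1` F k) by [].
  apply: measurableI.
    rewrite -[X in measurable X]setTI; apply: (measurable_tnth ord0) => //.
    by case: (Goo k).
  rewrite -[X in measurable X]setTI; apply: measurable_behead => //.
  by case: (Foo k).
rewrite /nextm /pushforward.
have -> : consf @^-1` [set x : n.+1.-tuple R | G k (thead x) /\ F k [tuple of behead x]] = G k `*` F k.
  apply/seteqP; split => -[x y] /=; rewrite /consf /= theadE.
    move=> [? H]; split => //; move: H; congr (F k _); exact: val_inj.
  move=> [? H]; split => //; move: H; congr (F k _); exact: val_inj.
rewrite product_measure2E; [|by case: (Goo k)|by case: (Foo k)].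
apply: lte_mul_pinfty; [exact: measure_ge0| |by case: (Foo k)].
by rewrite ge0_fin_numE ?measure_ge0//; case: (Goo k).
Qed.
HB.instance Definition _ := Measure_isSigmaFinite.Build _ _ _ nextm nextm_sf.

End Next.
Fixpoint ltm (R : realType) (n : nat) : {sigma_finite_measure set (n.-tuple R) -> \bar R} :=
  match n with
  | 0 => (@dirac _ _ ([tuple] : 0.-tuple R) R : {sigma_finite_measure set _ -> \bar R})
  | n'.+1 => (nextm (ltm R n') : {sigma_finite_measure set _ -> \bar R})
  end.
Lemma ltmE (R : realType) n : (@ltm R n : set _ -> \bar R) = @lebesgue_tuple R n.
Proof.
elim: n => [//|n IH] /=.
by rewrite /nextm IH.
Qed.


Section Slab.
Context (R : realType) (a b : R).
Definition lin n (c : R) (v x : n.-tuple R) := c + \sum_(i < n) tnth v i * tnth x i.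
Definition slab n c (v : n.-tuple R) (t : R) := [set x : n.-tuple R | cube a b x /\ `|lin c v x| <= t].

Lemma mlin n c (v : n.-tuple R) : measurable_fun setT (lin c v).
Proof.
apply: measurable_funD; first exact: measurable_cst.
apply: measurable_sum => i; apply: measurable_funM; first exact: measurable_cst.
exact: measurable_tnth.
Qed.

Lemma mcube n : measurable (@cube R n a b).
Proof.
have -> : @cube R n a b = \bigcap_(i in [set: 'I_n]) ((fun x : n.-tuple R => tnth x i) @^-1` `[a, b]).
  apply/seteqP; split => x /=.
    by move=> H i _; rewrite /= in_itv /=; exact: H.
  by move=> H i; have := H i I; rewrite /= in_itv.
apply: fin_bigcap_measurable; first exact: finite_finset.
move=> i _; rewrite -[X in measurable X]setTI; apply: measurable_tnth => //.
Qed.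

Lemma mslab n c (v : n.-tuple R) t : measurable (slab c v t).
Proof.
have -> : slab c v t = cube a b `&` (lin c v @^-1` `[-t, t]).
  by apply/seteqP; split => x /=; rewrite in_itv /= -ler_norml.
apply: measurableI; first exact: mcube.
by rewrite -[X in measurable X]setTI; apply: mlin.
Qed.
End Slab.

Section Cube.
Context (R : realType).
Local Open Scope ereal_scope.

Lemma ltmS n (A : set (n.+1.-tuple R)) :
  @ltm R n.+1 A = ((@lebesgue_measure R) \x^ (@ltm R n)) (@consf R n @^-1` A).
Proof. by []. Qed.

Lemma tnth_cons0 n (x0 : R) (y : n.-tuple R) : tnth (consf (x0, y)) ord0 = x0.
Proof. by []. Qed.

Lemma tnth_consS n (x0 : R) (y : n.-tuple R) j : tnth (consf (x0, y)) (lift ord0 j) = tnth y j.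
Proof. by rewrite /consf /= tnthS. Qed.

Lemma cube_cons n (a b x0 : R) (y : n.-tuple R) :
  cube a b (consf (x0, y)) <-> ((a <= x0 <= b)%R /\ cube a b y).
Proof.
split.
  move=> H; split; first exact: (H ord0).
  by move=> j; have := H (lift ord0 j); rewrite tnth_consS.
move=> [H1 H2] i; case: (unliftP ord0 i) => [j ->|->].
  by rewrite tnth_consS.
by rewrite tnth_cons0.
Qed.

Lemma leb_itv (x y : R) : (x <= y)%R -> (@lebesgue_measure R) `[x, y] = (y - x)%:E.
Proof.
move=> xy; rewrite lebesgue_measure_itv /=.
rewrite lte_fin; move: xy; rewrite le_eqVlt => /orP [/eqP ->|->].
  by rewrite ltxx subrr.
by rewrite -EFinD.
Qed.

Lemma ltm_cube n (a b : R) : (a <= b)%R -> @ltm R n (cube a b) = ((b - a) ^+ n)%:E.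
Proof.
move=> ab; elim: n => [|n IH].
  by rewrite /= /dirac indicE mem_set // => -[].
rewrite ltmS.
have -> : @consf R n @^-1` cube a b = `[a, b] `*` cube a b.
  apply/seteqP; split => -[x0 y] /=; rewrite cube_cons /= in_itv //.
rewrite product_measure2E //; last exact: mcube.
transitivity ((b - a)%:E * ((b - a) ^+ n)%:E); last by rewrite -EFinM exprS.
by congr (_ * _); [exact: leb_itv|exact: IH].
Qed.
End Cube.

Section SlabMeasure.
Context (R : realType) (a b : R) (ab : (a <= b)%R).
Local Open Scope ereal_scope.

Lemma lin_cons n c (v : n.+1.-tuple R) x0 (y : n.-tuple R) :
  lin c v (consf (x0, y)) = lin (c + tnth v ord0 * x0)%R [tuple of behead v] y.
Proof.
rewrite /lin big_ord_recl tnth_cons0 -addrA; congr (_ + (_ + _))%R.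
apply: eq_bigr => i _; rewrite tnth_consS tnth_behead; congr (tnth v _ * _)%R.
by apply: val_inj; rewrite /= inordK // ltnS.
Qed.

Lemma slab_cons n c (v : n.+1.-tuple R) t x0 (y : n.-tuple R) :
  slab a b c v t (consf (x0, y)) <->
  ((a <= x0 <= b)%R /\ slab a b (c + tnth v ord0 * x0)%R [tuple of behead v] t y).
Proof.
rewrite /slab /= cube_cons lin_cons; split; [by move=> [[? ?] ?]|by move=> [? [? ?]]].
Qed.

Lemma xsection_slab n c (v : n.+1.-tuple R) t x :
  xsection (@consf R n @^-1` slab a b c v t) x =
  if (a <= x <= b)%R then slab a b (c + tnth v ord0 * x)%R [tuple of behead v] t else set0.
Proof.
apply/seteqP; split => y; rewrite /xsection /= inE /= slab_cons;
  case: ifP => // _; by move=> [].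
Qed.

Lemma itv_slab (c v0 t x : R) : v0 != 0%R -> (`|c + v0 * x| <= t)%R ->
  x \in `[- (c / v0) - t / `|v0|, - (c / v0) + t / `|v0|]%R.
Proof.
move=> v00 H; rewrite in_itv /= -ler_distl opprK ler_pdivlMr ?normr_gt0 //.
rewrite -normrM (_ : ((x + c / v0) * v0 = c + v0 * x)%R) //.
by rewrite mulrDl divfK // addrC mulrC.
Qed.


Lemma ysection_slab n c (v : n.+1.-tuple R) t (y : n.-tuple R) :
  ysection (@consf R n @^-1` slab a b c v t) y =
  [set x | (a <= x <= b)%R /\ slab a b (c + tnth v ord0 * x)%R [tuple of behead v] t y].
Proof.
apply/seteqP; split => x; rewrite /ysection /= inE /= slab_cons //.
Qed.


Lemma num1 n (K : R) : (0 <= K)%R -> (K * (b - a) ^+ n <= K * (b - a + 1) ^+ n.+1)%R.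
Proof.
move=> K0; apply: ler_wpM2l => //.
have h1 : (1 <= b - a + 1)%R by rewrite lerDr subr_ge0.
apply: (le_trans (y := ((b - a + 1) ^+ n)%R)).
  have h0 : (0 <= b - a)%R by rewrite subr_ge0.
  apply: lerXn2r; rewrite ?nnegrE ?lerDl //; exact: addr_ge0.
exact: ler_weXn2l.
Qed.

Lemma ltm_slab n : forall c (v : n.-tuple R) (t m : R) (j : 'I_n),
  (0 < m)%R -> (m <= `|tnth v j|)%R -> (0 <= t)%R ->
  @ltm R n (slab a b c v t) <= (2 * t / m * (b - a + 1) ^+ n)%:E.
Proof.
elim: n => [|n IH] c v t m j m0 mv t0; first by have := ltn_ord j.
rewrite ltmS.
set A := @consf R n @^-1` slab a b c v t.
have mA : measurable A.
  by rewrite -[A]setTI; apply: mconsf => //; exact: mslab.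
move: mv; case: (unliftP ord0 j) => [j' ->|->] mv.
- have e : ((@lebesgue_measure R) \x (ltm R n)) A = ((@lebesgue_measure R) \x^ (ltm R n)) A.
    apply: product_measure_unique => //= A1 A2 mA1 mA2.
    exact: product_measure2E.
  have mv' : (m <= `|tnth [tuple of behead v] j'|)%R.
    rewrite tnth_behead (_ : inord j'.+1 = lift ord0 j') //.
    by apply: val_inj; rewrite /= inordK // ltnS.
  set K := (2 * t / m * (b - a + 1) ^+ n)%R.
  have K0 : (0 <= K)%R.
    have h0 : (0 <= b - a + 1)%R by rewrite addr_ge0 // subr_ge0.
    rewrite /K; apply: mulr_ge0; [apply: divr_ge0; [apply: mulr_ge0 =>//|exact: ltW]|exact: exprn_ge0].
  apply: (le_trans (y := ((@lebesgue_measure R) \x (ltm R n)) A)).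
    by rewrite le_eqVlt; apply/orP; left; apply/eqP; symmetry; exact: e.
  rewrite /product_measure1 /=.
  apply: (le_trans (y := \int[@lebesgue_measure R]_x (K%:E * (\1_(`[a, b]%classic) x)%:E))).
    apply: ge0_le_integral => //.
    - exact: measurable_fun_xsection.
    - by apply/measurable_funeM/measurable_EFinP; apply: measurable_indic; exact: measurable_itv.
    - move=> x _; rewrite xsection_slab indicE; case: ifP => hx.
        rewrite mem_set ?mule1; last by rewrite /= in_itv /=.
        exact: IH mv' t0.
      by rewrite measure0 mule_ge0.
  rewrite (@ge0_integralZl _ _ _ (@lebesgue_measure R) setT measurableT (fun x => (\1_(`[a, b]%classic) x)%:E)) //.
    apply: (le_trans (y := K%:E * (b - a)%:E)).
      rewrite le_eqVlt; apply/orP; left; apply/eqP; congr (_ * _).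
      rewrite integral_indic //.
      rewrite setIT; exact: leb_itv.
    rewrite -EFinM lee_fin.
    apply: (le_trans (y := (K * (b - a + 1))%R)); first by apply: ler_wpM2l => //; rewrite lerDl.
    by rewrite /K -mulrA -exprSr.
  apply: measurableT_comp => //; apply: measurable_indic; exact: measurable_itv.
- rewrite /product_measure2 /=.
  have v00 : tnth v ord0 != 0%R by rewrite -normr_gt0 (lt_le_trans m0 mv).
  have K0 : (0 <= 2 * t / m)%R by rewrite divr_ge0 ?mulr_ge0 // ltW.
  apply: (le_trans (y := \int[ltm R n]_y ((2 * t / m)%:E * (\1_(cube a b) y)%:E))).
    apply: ge0_le_integral => //.
    - exact: measurable_fun_ysection.
    - by apply/measurable_funeM/measurable_EFinP; apply: measurable_indic; exact: mcube.
    - move=> y _; rewrite indicE; case: (boolP (y \in cube a b)) => yc.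
        rewrite mule1.
        set c' := lin c [tuple of behead v] y.
        set r := (t / `|tnth v ord0|)%R.
        have sub : ysection A y `<=` `[(- (c' / tnth v ord0) - r)%R, (- (c' / tnth v ord0) + r)%R]%classic.
          move=> x; rewrite ysection_slab => -[_ [_ H]].
          apply: (@itv_slab c' (tnth v ord0) t x v00).
          by move: H; rewrite /lin /c' addrAC.
        have mys : ysection A y \in measurable by rewrite inE; apply: measurable_ysection.
        have mitv : `[(- (c' / tnth v ord0) - r)%R, (- (c' / tnth v ord0) + r)%R]%classic \in measurable.
          by rewrite inE; exact: measurable_itv.
        have h := @le_measure _ _ _ (@lebesgue_measure R) _ _ mys mitv sub. apply: (le_trans h).
        have r0 : (0 <= r)%R by rewrite divr_ge0.
        apply: (le_trans (y := ((- (c' / tnth v ord0) + r) - (- (c' / tnth v ord0) - r))%:E)).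
          rewrite le_eqVlt; apply/orP; left; apply/eqP; apply: leb_itv.
          by rewrite lerD2l (le_trans _ r0) // oppr_le0.
        rewrite lee_fin (_ : (_ - _ = 2 * r)%R); last by ring.
        rewrite /r mulrA; apply: ler_wpM2l; first by rewrite mulr_ge0.
        by rewrite lef_pV2 ?posrE // (lt_le_trans m0 mv).
      rewrite mule0 ysection_slab (_ : [set x | _] = set0) ?measure0 //.
      by apply/seteqP; split => x // [_ [yc' _]]; move: yc; rewrite (mem_set yc').
  rewrite (@ge0_integralZl _ _ _ (ltm R n) setT measurableT (fun y => (\1_(cube a b) y)%:E)) //.
    apply: (le_trans (y := (2 * t / m)%:E * ((b - a) ^+ n)%:E)).
      rewrite le_eqVlt; apply/orP; left; apply/eqP; congr (_ * _).
      rewrite integral_indic //; last exact: mcube.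
      rewrite setIT; exact: ltm_cube.
    rewrite -EFinM lee_fin; exact: num1.
  apply: measurableT_comp => //; apply: measurable_indic; exact: mcube.
Qed.
End SlabMeasure.


Section Aux.
Context (R : realType).

Lemma coord_le_enorm n (v : 'rV[R]_n) i : `|v ord0 i| <= enorm v.
Proof.
rewrite /enorm -sqrtr_sqr ler_sqrt ?sumr_ge0 // => [|k _]; last exact: sqr_ge0.
rewrite (bigD1 i) //= lerDl sumr_ge0 // => k _; exact: sqr_ge0.
Qed.

Lemma enorm_ge0 n (v : 'rV[R]_n) : 0 <= enorm v.
Proof. exact: sqrtr_ge0. Qed.

Lemma lin_diff n (c c' : R) (v v' x : n.-tuple R) (dl B : R) :
  `|c - c'| <= dl -> (forall i, `|tnth v i - tnth v' i| <= dl) ->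
  (forall i, `|tnth x i| <= B) -> 0 <= B ->
  `|lin c v x - lin c' v' x| <= dl * (1 + n%:R * B).
Proof.
move=> hc hv hx B0.
have dl0 : 0 <= dl := le_trans (normr_ge0 _) hc.
have -> : lin c v x - lin c' v' x = (c - c') + \sum_(i < n) (tnth v i - tnth v' i) * tnth x i.
  rewrite /lin (_ : \sum_(i < n) (tnth v i - tnth v' i) * tnth x i =
     \sum_(i < n) tnth v i * tnth x i - \sum_(i < n) tnth v' i * tnth x i).
    by ring.
  by rewrite -sumrB; apply: eq_bigr => i _; rewrite mulrBl.
rewrite mulrDr mulr1; apply: (le_trans (ler_normD _ _)); apply: lerD => //.
apply: (le_trans (ler_norm_sum _ _ _)).
apply: (le_trans (y := \sum_(i < n) dl * B)).
  apply: ler_sum => i _; rewrite normrM; apply: ler_pM => //.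
rewrite sumr_const card_ord -mulr_natr le_eqVlt; apply/orP; left; apply/eqP; ring.
Qed.

Lemma sign_stable (L u0 : R) : u0 != 0 -> `|L - u0| <= `|u0| / 2 -> (0 < L) = (0 < u0).
Proof.
move=> u00; rewrite ler_norml => /andP [h1 h2].
case: (ltrgtP 0 u0) u00 => // hu _.
  rewrite gtr0_norm // in h1 h2; apply/idP; lra.
rewrite ltr0_norm // in h1 h2; apply/negbTE; rewrite -leNgt; lra.
Qed.
End Aux.


Section Rows.
Context (R : realType) (a b : R) (d : nat).

Definition vt (v : 'rV[R]_d.+1) : d.-tuple R := [tuple v ord0 (widen_ord (leqnSn d) i) | i < d].

Lemma IsetE (v : 'rV[R]_d.+1) : Iset a b v = [set x | cube a b x /\ 0 < lin (v ord0 ord_max) (vt v) x].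
Proof.
rewrite /Iset /lin; apply/seteqP; split => x /= [cx H]; split => //.
  rewrite (eq_bigr (fun i => v ord0 (widen_ord (leqnSn d) i) * tnth x i)) // => i _.
  by rewrite tnth_mktuple.
rewrite (eq_bigr (fun i => tnth (vt v) i * tnth x i)) // => i _.
by rewrite tnth_mktuple.
Qed.

Lemma mIset (v : 'rV[R]_d.+1) : measurable (Iset a b v).
Proof.
have -> : Iset a b v = cube a b `&` (lin (v ord0 ord_max) (vt v) @^-1` `]0, +oo[).
  by rewrite IsetE; apply/seteqP; split => x /=; rewrite in_itv /= andbT.
apply: measurableI; first exact: mcube.
by rewrite -[X in measurable X]setTI; apply: mlin.
Qed.

Lemma abs_le_ab (x : R) : a <= x <= b -> `|x| <= `|a| + `|b|.
Proof.
move=> /andP [h1 h2].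
have := ler_norml a `|a|; rewrite lexx => /esym /andP [ha1 ha2].
have := ler_norml b `|b|; rewrite lexx => /esym /andP [hb1 hb2].
rewrite ler_norml; apply/andP; split; lra.
Qed.

Lemma lin_rows (v w : 'rV[R]_d.+1) x : cube a b x ->
  `|lin (v ord0 ord_max) (vt v) x - lin (w ord0 ord_max) (vt w) x|
    <= enorm (v - w) * (1 + d%:R * (`|a| + `|b|)).
Proof.
move=> cx; apply: lin_diff.
- by have := coord_le_enorm (v - w) ord_max; rewrite !mxE.
- by move=> i; rewrite !tnth_mktuple; have := coord_le_enorm (v - w) (widen_ord (leqnSn d) i); rewrite !mxE.
- by move=> i; apply: abs_le_ab; exact: cx.
- by rewrite addr_ge0.
Qed.
End Rows.


Unset Implicit Arguments. Set Strict Implicit. Set Printing Implicit Defensive.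

Lemma enormN (R : realType) n (v : 'rV[R]_n) : enorm (- v) = enorm v.
Proof. by rewrite /enorm; congr Num.sqrt; apply: eq_bigr => i _; rewrite mxE sqrrN. Qed.

Theorem lemma2p4 (R : realType) (d : nat) (a b : R) (hab : a < b)
  (p : d.-tuple R -> R)
  (p_meas : measurable_fun (cube a b) p)
  (p_ge0 : forall x, cube a b x -> 0 <= p x)
  (p_bdd : exists M : R, forall x, cube a b x -> p x <= M)
  (u : 'rV[R]_d.+1) (hu : u != 0) :
  exists eps C : R, 0 < eps /\ 0 < C /\
    forall v w : 'rV[R]_d.+1,
      Num.max (enorm (u - v)) (enorm (u - w)) <= eps ->
      (\int[@lebesgue_tuple R d]_(x in symdiff (Iset a b v) (Iset a b w)) (p x)%:E
         <= (C * enorm (v - w))%:E)%E.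
Proof.
have ab := ltW hab.
case: p_bdd => M hM.
set M0 := `|M| + 1.
have M00 : 0 < M0 by have := normr_ge0 M; rewrite /M0; lra.
have hM0 : forall x, cube a b x -> p x <= M0.
  move=> x cx; apply: (le_trans (hM x cx)); have := ler_norm M; rewrite /M0; lra.
set K := 1 + d%:R * (`|a| + `|b|).
have K0 : 0 < K by rewrite /K ltr_wpDr // mulr_ge0 // addr_ge0.
set L := b - a + 1.
have L0 : 0 < L by rewrite /L; lra.
rewrite -ltmE.
have intbound : forall S, measurable S -> S `<=` cube a b ->
    (\int[ltm R d]_(x in S) (p x)%:E <= M0%:E * ltm R d S)%E.
  move=> S mS Sc.
  apply: (@le_trans _ _ (\int[ltm R d]_(x in S) (cst M0%:E x))%E).
    apply: ge0_le_integral => //.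
    - by move=> x Sx; rewrite lee_fin; exact: p_ge0 (Sc x Sx).
    - by apply/measurable_EFinP; apply: measurable_funS p_meas => //; exact: mcube.
    - by move=> x Sx; rewrite lee_fin; exact: hM0 (Sc x Sx).
  by rewrite integral_cst.
have mS : forall v w : 'rV[R]_d.+1, measurable (symdiff (Iset a b v) (Iset a b w)).
  by move=> v w; rewrite /symdiff; apply: measurableU; apply: measurableD; exact: mIset.
have Sc : forall v w : 'rV[R]_d.+1, symdiff (Iset a b v) (Iset a b w) `<=` cube a b.
  by move=> v w x [[[cx _] _]|[[cx _] _]].
case: (pselect (exists j : 'I_d, u ord0 (widen_ord (leqnSn d) j) != 0)) => [[j hj]|hall].
- set m := `|u ord0 (widen_ord (leqnSn d) j)| / 2.
  have m0 : 0 < m by rewrite /m divr_gt0 // normr_gt0.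
  have C0 : 0 < M0 * (2 * K / m * L ^+ d).
    by rewrite mulr_gt0 // mulr_gt0 ?exprn_gt0 // divr_gt0 // mulr_gt0.
  exists m, (M0 * (2 * K / m * L ^+ d)); split => //; split => // v w.
  rewrite ge_max => /andP [huv huw].
  set dl := enorm (v - w).
  have dl0 : 0 <= dl by exact: enorm_ge0.
  have mv : m <= `|tnth (vt v) j|.
    rewrite tnth_mktuple.
    have h1 := coord_le_enorm (u - v) (widen_ord (leqnSn d) j).
    rewrite !mxE in h1.
    have h2 := ler_normB (u ord0 (widen_ord (leqnSn d) j)) (v ord0 (widen_ord (leqnSn d) j)).
    have h3 : `|u ord0 (widen_ord (leqnSn d) j)| = 2 * m by rewrite /m; field.
    have h4 := ler_distD (u ord0 (widen_ord (leqnSn d) j)) (v ord0 (widen_ord (leqnSn d) j)) 0.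
    have h5 := lerB_dist (u ord0 (widen_ord (leqnSn d) j)) (v ord0 (widen_ord (leqnSn d) j)).
    lra.
  have sub : symdiff (Iset a b v) (Iset a b w) `<=` slab a b (v ord0 ord_max) (vt v) (dl * K).
    move=> x; rewrite /symdiff !IsetE => -[[[cx hv] hw]|[[cx hw] hv]]; split => //;
      have := lin_rows v w cx; rewrite -/dl -/K.
      have hw' : lin (w ord0 ord_max) (vt w) x <= 0.
        by rewrite leNgt; apply/negP => h; apply: hw.
      rewrite !ler_norml => /andP [h1 h2]; apply/andP; split; lra.
    have hv' : lin (v ord0 ord_max) (vt v) x <= 0.
      by rewrite leNgt; apply/negP => h; apply: hv.
    rewrite !ler_norml => /andP [h1 h2]; apply/andP; split; lra.
  apply: (le_trans (intbound _ (mS v w) (Sc v w))).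
  apply: (@le_trans _ _ (M0%:E * ltm R d (slab a b (v ord0 ord_max) (vt v) (dl * K)))%E).
    apply: lee_wpmul2l; first by rewrite lee_fin ltW.
    by apply: le_measure; rewrite ?inE //; exact: mslab.
  apply: (@le_trans _ _ (M0%:E * (2 * (dl * K) / m * L ^+ d)%:E)%E).
    apply: lee_wpmul2l; first by rewrite lee_fin ltW.
    exact: (@ltm_slab R a b ab d _ _ _ _ _ m0 mv (mulr_ge0 dl0 (ltW K0))).
  rewrite -EFinM lee_fin le_eqVlt; apply/orP; left; apply/eqP; ring.
- have hz : forall k : 'I_d, u ord0 (widen_ord (leqnSn d) k) = 0.
    move=> k; apply/eqP; apply/negP => /negP h; apply: hall; by exists k.
  set u0 := u ord0 ord_max.
  have hu0 : u0 != 0.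
    apply: contra hu => /eqP h; apply/eqP/matrixP => i k; rewrite !mxE.
    case: (ltnP k d) => hk.
      by rewrite (_ : k = widen_ord (leqnSn d) (Ordinal hk)) ?ord1 ?hz //; apply: val_inj.
    by rewrite (_ : k = ord_max) ?ord1 //; apply: val_inj => /=; apply/eqP; rewrite eqn_leq hk -ltnS ltn_ord.
  have linu : forall x : d.-tuple R, lin u0 (vt u) x = u0.
    move=> x; rewrite /lin big1 ?addr0 // => i _; rewrite tnth_mktuple hz mul0r //.
  set eps := `|u0| / (2 * K).
  have eps0 : 0 < eps by rewrite /eps divr_gt0 ?normr_gt0 // mulr_gt0.
  exists eps, 1; split => //; split => // v w.
  rewrite ge_max => /andP [huv huw].
  have key : forall z : 'rV[R]_d.+1, enorm (u - z) <= eps -> forall x, cube a b x ->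
      (0 < lin (z ord0 ord_max) (vt z) x) = (0 < u0).
    move=> z hz' x cx; apply: sign_stable => //.
    have := lin_rows z u cx; rewrite linu -/K -enormN opprB.
    move=> h; apply: (le_trans h).
    have -> : `|u0| / 2 = eps * K by rewrite /eps; field; rewrite ?(gt_eqF K0) //.
    by apply: ler_wpM2r => //; exact: ltW.
  have -> : symdiff (Iset a b v) (Iset a b w) = set0.
    apply/seteqP; split => x // ; rewrite /symdiff !IsetE => -[[[cx hv] hw]|[[cx hw] hv]].
      by apply: hw; split => //; rewrite (key w huw x cx) -(key v huv x cx).
    by apply: hv; split => //; rewrite (key v huv x cx) -(key w huw x cx).
  by rewrite integral_set0 mul1r lee_fin; exact: enorm_ge0.
Qed.
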